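(* Let $G$ be a finite group, let $n\ge 1$ and let $m$ be odd. Suppose $G$ is $R_{2^n m}$ and $G$ has exactly $m(2^n-1)$ conjugacy classes containing involutions. Then for every central involution $z$ of $G$ and every involution $x\neq z$ of $G$, the element $xz$ is an involution that is not conjugate to $x$ in $G$.
   Context: For a finite group $G$, $\overline{G}=G\cup\{\infty\}$, and $K_V$ denotes the complete graph on vertex set $V$. $G$ acts on $\overline{G}$ by right multiplication, with $\infty g=\infty$ for all $g\in G$; for a subgraph $F$ of $K_{\overline{G}}$ and $g\in G$, $Fg$ is the graph obtained by replacing every vertex $v$ by $vg$. A $k$-factor of $K_V$ is a spanning $k$-regular subgraph, and a $k$-factorization is a set of $k$-factors whose edge sets partition the edge set of $K_V$. A $k$-factorization $\mathcal{F}$ of $K_{\overline{G}}$ is $1$-rotational if $Fg\in\mathcal{F}$ for all $F\in\mathcal{F}$ and $g\in G$. A finite group $G$ is called $R_k$ if there exists a $1$-rotational $k$-factorization of $K_{\overline{G}}$. An involution is an element of order $2$; a central involution is an involution in the center of $G$. *)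

(* Defs.v *)
From mathcomp Require Import all_boot all_fingroup all_solvable.
Set Implicit Arguments. Unset Strict Implicit. Unset Printing Implicit Defensive.
Local Open Scope group_scope.

Section OneRot.
Variable gT : finGroupType.

(* Vertex set \overline{G} = G ∪ {∞}, with ∞ represented by None. *)
Definition vtx := option gT.

Definition vact (v : vtx) (g : gT) : vtx :=
  match v with None => None | Some x => Some (x * g) end.

Definition is_edge (e : {set vtx}) : bool := #|e| == 2.
Definition all_edges : {set {set vtx}} := [set e | is_edge e].

(* A (spanning) subgraph of K_{\overline{G}} is given by its edge set. *)
Definition eact (e : {set vtx}) (g : gT) : {set vtx} := [set vact v g | v in e].
Definition gact (F : {set {set vtx}}) (g : gT) : {set {set vtx}} :=
  [set eact e g | e in F].

Definition degree (F : {set {set vtx}}) (v : vtx) : nat := #|[set e in F | v \in e]|.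

Definition is_kfactor (k : nat) (F : {set {set vtx}}) : bool :=
  (F \subset all_edges) && [forall v : vtx, degree F v == k].

Definition is_kfactorization (k : nat) (FF : {set {set {set vtx}}}) : bool :=
  [forall F in FF, is_kfactor k F] &&
  [forall F1 in FF, forall F2 in FF, (F1 != F2) ==> [disjoint F1 & F2]] &&
  (\bigcup_(F in FF) F == all_edges).

Definition one_rotational (FF : {set {set {set vtx}}}) : bool :=
  [forall F in FF, forall g : gT, gact F g \in FF].

Definition R_k (k : nat) : Prop :=
  exists FF : {set {set {set vtx}}}, is_kfactorization k FF && one_rotational FF.

End OneRot.

Definition involution (gT : finGroupType) (x : gT) : bool := #[x]%g == 2.

Definition n_invol_classes (gT : finGroupType) : nat :=
  #|[set C in classes [set: gT] | [exists x in C, involution x]]|.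

(* Main.v *)
Require Import Defs.
From mathcomp Require Import all_boot all_fingroup all_solvable zify.
Set Implicit Arguments. Unset Strict Implicit. Unset Printing Implicit Defensive.
Local Open Scope group_scope.
Section Aux.
Variable gT : finGroupType.

Lemma vact1 (v : vtx gT) : vact v 1 = v.
Proof. by case: v => [x|] //=; rewrite mulg1. Qed.

Lemma vactM (v : vtx gT) g h : vact (vact v g) h = vact v (g * h).
Proof. by case: v => [x|] //=; rewrite mulgA. Qed.

Lemma eact1 (e : {set vtx gT}) : eact e 1 = e.
Proof. by rewrite /eact (eq_imset _ vact1) imset_id. Qed.

Lemma eactM (e : {set vtx gT}) g h : eact (eact e g) h = eact e (g * h).
Proof.
rewrite /eact -imset_comp; apply: eq_imset => v /=; exact: vactM.
Qed.

Lemma pgact1 (F : {set {set vtx gT}}) : Defs.gact F 1 = F.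
Proof. by rewrite /Defs.gact (eq_imset _ eact1) imset_id. Qed.

Lemma pgactM (F : {set {set vtx gT}}) g h : Defs.gact (Defs.gact F g) h = Defs.gact F (g * h).
Proof.
rewrite /Defs.gact -imset_comp; apply: eq_imset => v /=; exact: eactM.
Qed.

Lemma eact2 (a b : vtx gT) g : eact [set a; b] g = [set vact a g; vact b g].
Proof. by rewrite /eact imsetU1 imset_set1. Qed.

Lemma mem_eact e (F : {set {set vtx gT}}) g : e \in F -> eact e g \in Defs.gact F g.
Proof. by move=> eF; apply: imset_f. Qed.

Lemma edge_inf (e : {set vtx gT}) : #|e| == 2 -> None \in e ->
  exists h, e = [set None; Some h].
Proof.
case/cards2P=> a [b [ab ->]]; rewrite !inE => /orP[]/eqP E.
  subst a. case: b ab => [h|] // _. by exists h.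
subst b. case: a ab => [h|] // _; exists h; by rewrite setUC.
Qed.

Lemma invP (y : gT) : involution y = (y != 1) && (y ^+ 2 == 1).
Proof.
rewrite /involution -order_dvdn -order_eq1.
have := order_gt0 y; case: #[y] => [|[|[|k]]] //.
Qed.

Lemma conj_central (z g : gT) : z \in 'Z([set: gT]) -> z ^ g = z.
Proof.
case/centerP=> _ zc; rewrite conjgE; have := zc g (in_setT g).
by move=> cz; rewrite cz mulKg.
Qed.

End Aux.
Lemma structure (gT : finGroupType) k : (0 < k)%N -> R_k gT k ->
  exists S : {group gT}, #|S| = k /\
    forall t : gT, involution t -> exists h, t ^ h \in S.
Proof.
move=> k0 [FF /andP[/andP[/andP[Hfac Hdis] /eqP Hcov] Hrot]].
have uniqF F1 F2 e : F1 \in FF -> F2 \in FF -> e \in F1 -> e \in F2 -> F1 = F2.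
  move=> F1F F2F e1 e2; apply/eqP; apply: contraT => ne.
  have := forallP Hdis F1; rewrite F1F /= => /forallP/(_ F2).
  by rewrite F2F ne /= => /disjointFr/(_ e1); rewrite e2.
have coverF (e : {set vtx gT}) : #|e| == 2 -> exists2 F, F \in FF & e \in F.
  move=> e2; have : e \in all_edges gT by rewrite inE.
  by rewrite -Hcov => /bigcupP[F FF1 eF]; exists F.
have rotF (F : {set {set vtx gT}}) g : F \in FF -> Defs.gact F g \in FF.
  by move=> FF1; have := forallP Hrot F; rewrite FF1 /= => /forallP/(_ g).
have facF (F : {set {set vtx gT}}) : F \in FF -> is_kfactor k F.
  by move=> FF1; have := forallP Hfac F; rewrite FF1.
have edgeF (F : {set {set vtx gT}}) (e : {set vtx gT}) : F \in FF -> e \in F -> #|e| == 2.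
  move=> /facF/andP[/subsetP sub _] /sub; by rewrite inE.
have degF (F : {set {set vtx gT}}) : F \in FF -> degree F None = k.
  by move=> /facF/andP[_ /forallP/(_ None)/eqP].
set e0 : {set vtx gT} := [set None; Some 1].
have e02 : #|e0| == 2 by rewrite cards2.
have [F1 F1F e0F1] := coverF e0 e02.
set S := [set g | Defs.gact F1 g == F1].
have keyS g : ([set None; Some g] \in F1) = (g \in S).
  rewrite inE; apply/idP/eqP => [eF|<-].
    apply: (uniqF _ _ [set None; Some g]) => //; first exact: rotF.
    by have := mem_eact g e0F1; rewrite eact2 /= mul1g.
  by have := mem_eact g e0F1; rewrite eact2 /= mul1g.
have Sgs : group_set S.
  apply/group_setP; split; first by rewrite inE pgact1.
  by move=> x y; rewrite !inE => /eqP Hx /eqP Hy; rewrite -pgactM Hx Hy.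
exists (Group Sgs); split.
  rewrite /= -(degF F1 F1F) /degree.
  have -> : [set e in F1 | None \in e] = (fun g => [set None; Some g]) @: S.
    apply/setP=> e; rewrite inE; apply/andP/imsetP.
      case=> eF Ne; have [h eh] := edge_inf (edgeF _ _ F1F eF) Ne.
      by exists h => //; rewrite -keyS -eh.
    case=> h hS ->; rewrite keyS; split=> //; by rewrite !inE eqxx.
  rewrite card_imset // => a b /setP/(_ (Some a)).
  by rewrite !inE /= eqxx /= => /esym/eqP[].
move=> t; rewrite invP => /andP[t1 t2].
set e := [set Some 1; Some t].
have e2 : #|e| == 2.
  rewrite cards2; have -> : (Some 1 != Some t :> vtx gT) by apply/eqP; case; apply/eqP; rewrite eq_sym. done.
have [F FF1 eF] := coverF e e2.
have : (0 < #|[set e in F | None \in e]|)%N by have := degF F FF1; rewrite /degree => ->.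
case/card_gt0P=> e' /[!inE] /andP[e'F Ne'].
have [h eh] := edge_inf (edgeF _ _ FF1 e'F) Ne'.
have Fh : F = Defs.gact F1 h.
  apply: (uniqF _ _ e') => //; first exact: rotF.
  by have := mem_eact h e0F1; rewrite eact2 /= mul1g -eh.
have Ft : Defs.gact F t = F.
  apply: (uniqF _ _ e) => //; first exact: rotF.
  have := mem_eact t eF; rewrite eact2 /= mul1g.
  have -> : t * t = 1 by apply/eqP.
  by rewrite /e setUC.
exists h^-1; rewrite /= inE conjgE invgK.
rewrite Fh !pgactM in Ft.
by rewrite mulgA -pgactM Ft pgactM mulgV pgact1.
Qed.
Theorem theorem2p6 (gT : finGroupType) (n m : nat) :
  (0 < n)%N -> odd m ->
  R_k gT (2 ^ n * m) ->
  n_invol_classes gT = (m * (2 ^ n - 1))%N ->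
  forall z : gT, z \in 'Z([set: gT]) -> involution z ->
  forall x : gT, involution x -> x != z ->
    involution (x * z) /\ x * z \notin x ^: [set: gT].
Proof.
move=> n0 om HR Hcl z zZ zi x xi xz.
have m0 : (0 < m)%N by case: (posnP m) om => [->|].
have k0 : (0 < 2 ^ n * m)%N by rewrite muln_gt0 expn_gt0 m0.
have czx : commute x z.
  by case/centerP: zZ => _ /(_ x (in_setT x)).
have xzi : involution (x * z).
  move: xi zi; rewrite !invP => /andP[x1 x2] /andP[z1 z2].
  rewrite expgMn // (eqP x2) (eqP z2) mulg1 eqxx andbT.
  apply: contra xz => /eqP h; apply/eqP.
  have zz : z * z = 1 by apply/eqP.
  by rewrite -[x]mulg1 -zz mulgA h mul1g.
split=> //; apply/negP => xzx.
have [S [cS Hconj]] := structure k0 HR.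
set InvS := [set s in S | involution s].
have bound : (#|InvS| + m <= 2 ^ n * m)%N.
  have mS : (m %| #|S|)%N by rewrite cS dvdn_mull.
  have := Frobenius_Ldiv mS.
  have L1 : (1 : gT) \in 'Ldiv_m(S) by apply/LdivP; rewrite group1 expg1n.
  have Lpos : (0 < #|'Ldiv_m(S)|)%N by apply/card_gt0P; exists 1.
  move=> /(dvdn_leq Lpos) Lm.
  have dis : InvS :&: 'Ldiv_m(S) = set0.
    apply/setP=> s; rewrite !inE; apply/negP => /and3P[/andP[_ si] _ sm].
    move: si; rewrite /involution => /eqP so.
    by move: sm; rewrite -order_dvdn so dvdn2 om.
  have sub : InvS :|: 'Ldiv_m(S) \subset S.
    by apply/subsetP=> s; rewrite !inE => /orP[/andP[]|/andP[]].
  have := subset_leq_card sub; rewrite -cS.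
  have := cardsUI InvS 'Ldiv_m(S); rewrite dis cards0 addn0 => ->.
  by move=> h; apply: leq_trans h; rewrite leq_add2l.
set Cls := [set C in classes [set: gT] | [exists y in C, involution y]].
have HCls : #|Cls| = (2 ^ n * m - m)%N.
  by rewrite /n_invol_classes in Hcl; rewrite Hcl mulnBr muln1 mulnC.
set phi := fun s : gT => s ^: [set: gT].
have img : phi @: InvS = Cls.
  apply/setP=> C; apply/imsetP/idP.
    case=> s; rewrite inE => /andP[sS si] ->.
    rewrite inE mem_classes ?in_setT //=; apply/existsP; exists s.
    by rewrite class_refl.
  rewrite inE => /andP[/imsetP[y0 _ ->] /existsP[y /andP[yC yi]]].
  have [h yh] := Hconj y yi.
  exists (y ^ h); first by rewrite inE yh /involution orderJ.
  by rewrite /phi classGidl ?in_setT //; apply/esym/class_eqP.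
have [h xh] := Hconj x xi.
have zS : z \in S.
  by have [g zg] := Hconj z zi; rewrite (conj_central g zZ) in zg.
have noninj : ~~ (#|phi @: InvS| == #|InvS|).
  apply/imset_injP => inj.
  have s1 : x ^ h \in InvS by rewrite inE xh /involution orderJ.
  have s2 : (x * z) ^ h \in InvS.
    rewrite inE /involution orderJ (xzi : #[x * z] == 2) andbT conjMg (conj_central h zZ).
    by rewrite groupM.
  have := inj _ _ s1 s2.
  rewrite /phi !classGidl ?in_setT // (class_eqP xzx) => /(_ erefl).
  rewrite conjMg (conj_central h zZ) => /(congr1 (mulg ((x ^ h)^-1))).
  rewrite mulVg mulKg => z1.
  by move: zi; rewrite invP -z1 eqxx.
have := leq_imset_card phi InvS; rewrite leq_eqVlt (negbTE noninj) /= img HCls => Hlt.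
have mk : (m <= 2 ^ n * m)%N by rewrite leq_pmull // expn_gt0.
move: bound; rewrite addnC -leq_subRL // => /(leq_trans Hlt); by rewrite ltnn.
Qed.
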